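(* Let $G\in\mathrm{C}^1(\mathbb{R})$ be coercive, $V\in\mathrm{Lip}(\mathbb{R})$ $1$-periodic, $\theta\in\mathbb{R}$, and let $\overline{H}$, $f_\theta$, $I_\theta$, $B_\theta$, $b(\theta)$ be as in the context (with $I_\theta(1)\neq0$). (a) If $I_\theta(1)>0$, then for all sufficiently small $h>0$ there is $\theta^*\in(\theta,\theta+hb(\theta))$ with $\overline{H}(\theta^* )=\overline{H}(\theta)+h/2>\overline{H}(\theta)$. (b) If $I_\theta(1)<0$, then for all sufficiently small $h>0$ there is $\theta^*\in(\theta-hb(\theta),\theta)$ with $\overline{H}(\theta^* )=\overline{H}(\theta)+h/2>\overline{H}(\theta)$.
   Context: $G$ coercive means $G(p)\to\infty$ as $p\to\pm\infty$. For each $\theta\in\mathbb{R}$, $\overline{H}(\theta)\in\mathbb{R}$ and the $1$-periodic $f_\theta\in\mathrm{C}^1(\mathbb{R})$ are the unique number and function with $\int_0^1 f_\theta=\theta$ and $f_\theta'(x)+G(f_\theta(x))+V(x)=\overline{H}(\theta)$ for all $x$. Set $I_\theta(x)=\int_0^x G'(f_\theta(y))\,dy$ and $B_\theta(x)=\int_0^x e^{I_\theta(y)}dy$. When $I_\theta(1)\ne0$, let $g_\theta(x)=s\big(B_\theta(x)+\frac{B_\theta(1)}{e^{I_\theta(1)}-1}\big)e^{-I_\theta(x)}$ where $s=1$ if $I_\theta(1)>0$ and $s=-1$ if $I_\theta(1)<0$; this is the $1$-periodic positive $\mathrm{C}^1$ solution of $g'+G'(f_\theta)g=s$. Define $b(\theta)=\int_0^1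 g_\theta(x)\,dx>0$. *)

(* Defs.v *)
From Stdlib Require Import Reals.
From Coquelicot Require Import Coquelicot.
Open Scope R_scope.

Definition is_C1 (f : R -> R) : Prop :=
  (forall x, ex_derive f x) /\ (forall x, continuous (Derive f) x).

Definition coercive (G : R -> R) : Prop :=
  filterlim G (Rbar_locally p_infty) (Rbar_locally p_infty) /\
  filterlim G (Rbar_locally m_infty) (Rbar_locally p_infty).

Definition lipschitz (V : R -> R) : Prop :=
  exists L, forall x y, Rabs (V x - V y) <= L * Rabs (x - y).

Definition periodic1 (f : R -> R) : Prop := forall x, f (x + 1) = f x.

Definition cell_solution (G V : R -> R) (Hbar : R -> R) (f : R -> R -> R) (th : R) : Prop :=
  periodic1 (f th) /\ is_C1 (f th) /\ RInt (f th) 0 1 = th /\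
  forall x, Derive (f th) x + G (f th x) + V x = Hbar th.

Definition Ith (G : R -> R) (f : R -> R -> R) (th x : R) : R :=
  RInt (fun y => Derive G (f th y)) 0 x.

Definition Bth (G : R -> R) (f : R -> R -> R) (th x : R) : R :=
  RInt (fun y => exp (Ith G f th y)) 0 x.

Definition sgn_th (G : R -> R) (f : R -> R -> R) (th : R) : R :=
  if Rlt_dec 0 (Ith G f th 1) then 1 else -1.

Definition gth (G : R -> R) (f : R -> R -> R) (th x : R) : R :=
  sgn_th G f th *
  (Bth G f th x + Bth G f th 1 / (exp (Ith G f th 1) - 1)) *
  exp (- Ith G f th x).

Definition bth (G : R -> R) (f : R -> R -> R) (th : R) : R :=
  RInt (gth G f th) 0 1.

(* Main.v *)
Require Import Defs.
From Stdlib Require Import Reals Lra Classical.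
From Coquelicot Require Import Coquelicot.
Open Scope R_scope.

Lemma cont_eps (f : R -> R) y eps : continuity_pt f y -> 0 < eps ->
  exists eta, 0 < eta /\ forall t, Rabs (t - y) < eta -> Rabs (f t - f y) < eps.
Proof.
  intros Hc He. destruct (Hc eps He) as [a [Ha H]].
  exists a; split; auto. intros t Ht.
  destruct (Req_dec y t) as [->|Hne].
  - rewrite Rminus_diag, Rabs_R0; auto.
  - apply H. split. split; [exact I|exact Hne]. exact Ht.
Qed.

Lemma der_cont (f : R -> R) y : ex_derive f y -> continuity_pt f y.
Proof. intros H. apply continuity_pt_filterlim. apply (ex_derive_continuous f y H). Qed.

Lemma LS (d : R -> R) y : ex_derive d y -> Derive d y > 0 ->
  exists del, 0 < del /\ forall h, 0 < h < del -> d (y - h) < d y /\ d y < d (y + h).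
Proof.
  intros Hd Hp.
  pose proof (Derive_correct d y Hd) as H. apply is_derive_Reals in H.
  destruct (H (Derive d y) Hp) as [del Hdel].
  exists del; split; [apply cond_pos|]. intros h [h0 h1].
  split.
  - assert (Hn : -h <> 0) by lra. assert (Ha : Rabs (-h) < del) by (rewrite Rabs_left; lra).
    specialize (Hdel _ Hn Ha).
    set (q := (d (y + - h) - d y) / - h) in *.
    assert (E : d (y + - h) - d y = q * - h) by (unfold q; field; lra).
    apply Rabs_def2 in Hdel. replace (y - h) with (y + - h) by ring. nra.
  - assert (Hn : h <> 0) by lra. assert (Ha : Rabs h < del) by (rewrite Rabs_right; lra).
    specialize (Hdel _ Hn Ha).
    set (q := (d (y + h) - d y) / h) in *.
    assert (E : d (y + h) - d y = q * h) by (unfold q; field; lra).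
    apply Rabs_def2 in Hdel. nra.
Qed.

Lemma L1 (d : R -> R) x0 : (forall y, ex_derive d y) -> 0 <= x0 <= 1 ->
  d x0 = 0 -> d (x0 + 1) = 0 ->
  (forall y, 0 <= y <= 2 -> d y = 0 -> Derive d y > 0) -> False.
Proof.
  intros Hd Hx0 H0 H1 Hz.
  destruct (LS d x0 (Hd _) (Hz x0 ltac:(lra) H0)) as [d1 [Hd1 P1]].
  destruct (LS d (x0+1) (Hd _) (Hz (x0+1) ltac:(lra) H1)) as [d2 [Hd2 P2]].
  set (e := Rmin (Rmin d1 d2) 1 / 4).
  assert (He : 0 < e /\ e < d1 /\ e < d2 /\ e <= 1/4).
  { pose proof (Rmin_l (Rmin d1 d2) 1). pose proof (Rmin_r (Rmin d1 d2) 1).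
    pose proof (Rmin_l d1 d2). pose proof (Rmin_r d1 d2).
    assert (0 < Rmin (Rmin d1 d2) 1) by (repeat apply Rmin_glb_lt; lra).
    unfold e. lra. }
  set (p := x0 + e). set (q := x0 + 1 - e).
  assert (Hp : d p > 0) by (destruct (P1 e ltac:(lra)) as [_ X]; unfold p; lra).
  assert (Hq : d q < 0) by (destruct (P2 e ltac:(lra)) as [X _]; unfold q; lra).
  assert (Hpq : p < q) by (unfold p, q; lra).
  set (T := fun x => p <= x <= q /\ forall t, p <= t <= x -> d t > 0).
  assert (Tb : bound T) by (exists q; intros x [Hx _]; lra).
  assert (Tp : exists x, T x).
  { exists p. split. lra. intros t Ht. replace t with p by lra. exact Hp. }
  destruct (completeness T Tb Tp) as [y [Hub Hlub]].
  assert (Hpy : p <= y) by (apply Hub; destruct Tp; split; [lra| intros t Ht; replace t with p by lra; exact Hp]).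
  assert (Hyq : y <= q) by (apply Hlub; intros x [Hx _]; lra).
  assert (A : forall t, p <= t < y -> d t > 0).
  { intros t Ht. destruct (Rlt_dec 0 (d t)) as [ok|nok]; [lra|].
    exfalso. assert (y <= t); [|lra]. apply Hlub. intros x [Hx Hx2].
    destruct (Rle_dec x t) as [|Hxt]; [auto|]. exfalso. apply nok. apply Hx2. lra. }
  pose proof (der_cont d y (Hd y)) as Hc.
  destruct (total_order_T (d y) 0) as [[Hneg|Hzero]|Hpos].
  - assert (p < y) by (destruct (Req_dec p y) as [<-|]; lra).
    destruct (cont_eps d y (- d y) Hc ltac:(lra)) as [eta [Heta Hc2]].
    set (t := Rmax (y - eta/2) p).
    assert (Ht : p <= t < y /\ Rabs (t - y) < eta).
    { unfold t. apply Rmax_case_strong; intros; split; try lra;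
      rewrite Rabs_left; lra. }
    specialize (A t ltac:(lra)). specialize (Hc2 t (proj2 Ht)).
    apply Rabs_def2 in Hc2. lra.
  - assert (p < y) by (destruct (Req_dec p y) as [<-|]; lra).
    destruct (LS d y (Hd y) (Hz y ltac:(unfold p,q in *; lra) Hzero)) as [dl [Hdl P]].
    set (h := Rmin (dl/2) ((y - p)/2)).
    assert (Hh : 0 < h < dl /\ h <= (y-p)/2) by (unfold h; apply Rmin_case_strong; intros; lra).
    destruct (P h ltac:(lra)) as [P3 _]. specialize (A (y - h) ltac:(lra)). lra.
  - assert (y < q) by (destruct (Req_dec y q) as [->|]; lra).
    destruct (cont_eps d y (d y) Hc ltac:(lra)) as [eta [Heta Hc2]].
    set (y' := Rmin (y + eta/2) q).
    assert (Hy' : y < y' <= q /\ y' < y + eta) by (unfold y'; apply Rmin_case_strong; intros; lra).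
    assert (T y').
    { split. lra. intros t Ht. destruct (Rlt_dec t y). apply A; lra.
      assert (Rabs (t - y) < eta) by (rewrite Rabs_right; lra).
      specialize (Hc2 t H2). apply Rabs_def2 in Hc2. lra. }
    specialize (Hub y' H2). lra.
Qed.

Lemma zero_mean (d : R -> R) : (forall x, continuous d x) -> RInt d 0 1 = 0 ->
  exists x0, 0 <= x0 <= 1 /\ d x0 = 0.
Proof.
  intros Hc Hi.
  assert (Hc' : continuity d) by (intro x; apply continuity_pt_filterlim; apply Hc).
  destruct (classic (exists x, 0 <= x <= 1 /\ d x <= 0)) as [[a [Ha Hda]]|Hn1].
  - destruct (classic (exists x, 0 <= x <= 1 /\ 0 <= d x)) as [[b [Hb Hdb]]|Hn2].
    + destruct (IVT_gen d a b 0 Hc') as [x [Hx Hdx]].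
      { split; [apply Rle_trans with (d a); [apply Rmin_l|lra] | apply Rle_trans with (d b); [lra|apply Rmax_r]]. }
      exists x. split; auto. split.
      apply Rle_trans with (Rmin a b); [apply Rmin_glb; lra | lra].
      apply Rle_trans with (Rmax a b); [lra | apply Rmax_lub; lra].
    + exfalso.
      assert (0 < RInt (fun x => - (d x)) 0 1).
      { apply RInt_gt_0. lra. intros x Hx. 
        assert (~ 0 <= d x) by (intro; apply Hn2; exists x; split; [lra|auto]).
        lra.
        intros x _. apply (continuous_opp d). apply Hc. }
      assert (E : RInt (fun x => - (d x)) 0 1 = - RInt d 0 1).
      { apply (RInt_opp d 0 1). apply ex_RInt_continuous. intros; apply Hc. }
      lra.
  - exfalso.
    assert (0 < RInt d 0 1).
    { apply RInt_gt_0. lra. intros x Hx.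
      assert (~ d x <= 0) by (intro; apply Hn1; exists x; split; [lra|auto]). lra.
      intros x _. apply Hc. }
    lra.
Qed.

Lemma C1_cont (f : R -> R) (x : R) : (forall y : R, ex_derive f y) -> continuous f x.
Proof. intros H. apply (ex_derive_continuous (K:=R_AbsRing) (V:=R_NormedModule) f x (H x)). Qed.

Lemma exRc (u : R -> R) a b : (forall x, continuous u x) -> ex_RInt u a b.
Proof. intros H. apply (ex_RInt_continuous (V:=R_CompleteNormedModule)). intros; apply H. Qed.

Lemma exRd (u : R -> R) a b : (forall x : R, ex_derive u x) -> ex_RInt u a b.
Proof. intros H. apply exRc. intros; apply C1_cont; auto. Qed.

Lemma RInt_lin (u v : R -> R) a b (l m : R) : ex_RInt u a b -> ex_RInt v a b ->
  RInt (fun x => l * u x + m * v x) a b = l * RInt u a b + m * RInt v a b.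
Proof.
  intros [Iu Hu] [Iv Hv].
  apply is_RInt_unique.
  rewrite (is_RInt_unique _ _ _ _ Hu), (is_RInt_unique _ _ _ _ Hv).
  apply (is_RInt_plus (fun x => l * u x) (fun x => m * v x)).
  apply (is_RInt_scal u a b l). auto. apply (is_RInt_scal v a b m). auto.
Qed.

Lemma comp_gen (G V Hbar : R -> R) (f : R -> R -> R) (psi : R) (u : R -> R) (sg : R) :
  cell_solution G V Hbar f psi -> (sg = 1 \/ sg = -1) ->
  (forall x, ex_derive u x) -> (forall x, 0 <= x <= 1 -> u (x + 1) = u x) ->
  RInt u 0 1 = psi ->
  (forall x, 0 <= x <= 2 -> u x = f psi x ->
     sg * (Derive u x + G (u x) + V x) > sg * Hbar psi) -> False.
Proof.
  intros [Hper [[Hfd Hfc] [Hm Hcell]]] Hsg Hud Hup Hum Hineq.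
  set (d := fun x => sg * (u x - f psi x)).
  assert (Hdd : forall x, is_derive d x (sg * (Derive u x - Derive (f psi) x))).
  { intro x. unfold d. apply is_derive_scal. apply (is_derive_minus u (f psi)); apply Derive_correct; auto. }
  assert (Hdd' : forall x, ex_derive d x) by (intro x; eexists; apply Hdd).
  assert (Hint : forall a b, ex_RInt u a b /\ ex_RInt (f psi) a b).
  { intros a b; split; apply exRd; auto. }
  destruct (zero_mean d) as [x0 [Hx0 Hdx0]].
  { intro x. apply C1_cont. auto. }
  { unfold d. 
    rewrite (RInt_ext (V:=R_CompleteNormedModule) _ (fun x => sg * u x + (- sg) * f psi x)) by (intros; simpl; ring).
    rewrite RInt_lin by apply Hint. rewrite Hum, Hm. change (sg * psi + - sg * psi = 0 :> R); ring. }
  apply (L1 d x0 Hdd' Hx0 Hdx0).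
  { unfold d in *. rewrite Hup by lra. rewrite Hper. exact Hdx0. }
  intros y Hy Hdy. rewrite (is_derive_unique _ _ _ (Hdd y)).
  assert (Huy : u y = f psi y).
  { unfold d in Hdy. destruct Hsg as [-> | ->]; lra. }
  specialize (Hineq y Hy Huy). specialize (Hcell y). rewrite Huy in Hineq.
  destruct Hsg as [-> | ->]; lra.
Qed.

Lemma bounds (F : R -> R) a b : a <= b -> (forall x, ex_derive F x) ->
  exists A B, forall x, a <= x <= b -> A <= F x <= B.
Proof.
  intros Hab Hd.
  destruct (continuity_ab_min F a b Hab) as [m [Hm _]]. intros; apply der_cont; auto.
  destruct (continuity_ab_maj F a b Hab) as [M [HM _]]. intros; apply der_cont; auto.
  exists (F m), (F M). intros x Hx; split; auto.
Qed.

Lemma unif (G : R -> R) A B : (forall x, continuity_pt G x) -> forall eps, 0 < eps ->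
  exists del, 0 < del /\ forall x y, A <= x <= B -> A <= y <= B -> Rabs (x - y) < del ->
     Rabs (G x - G y) < eps.
Proof.
  intros Hc eps He.
  destruct (Heine G (fun c => A <= c <= B) (compact_P3 A B) (fun x _ => Hc x) (mkposreal eps He)) as [del Hdel].
  exists del. split. apply cond_pos. intros. apply (Hdel x y); auto.
Qed.

Lemma C1_contpt (G : R -> R) : is_C1 G -> forall x, continuity_pt G x.
Proof. intros [H _] x. apply der_cont, H. Qed.

Lemma Hbar_cont (G V Hbar : R -> R) (f : R -> R -> R) :
  is_C1 G -> (forall t, cell_solution G V Hbar f t) -> forall psi, continuity_pt Hbar psi.
Proof.
  intros HG Hcs psi.
  pose proof (Hcs psi) as [Hper [[Hfd Hfc] [Hm Hcell]]].
  destruct (bounds (f psi) 0 2 ltac:(lra) Hfd) as [A [B HAB]].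
  intros eps Heps.
  destruct (unif G (A - 1) (B + 1) (C1_contpt G HG) eps Heps) as [del [Hdel Hu]].
  exists (Rmin del 1). split. apply Rmin_glb_lt; lra.
  intros x [_ Hx]. unfold R_dist in *. simpl in Hx. unfold R_dist in Hx.
  pose proof (Rmin_l del 1). pose proof (Rmin_r del 1).
  set (c := x - psi).
  set (u := fun t => f psi t + c).
  assert (Hud : forall t, is_derive u t (Derive (f psi) t)).
  { intro t. unfold u. replace (Derive (f psi) t) with (Derive (f psi) t + 0) by ring.
    apply (is_derive_plus (f psi) (fun _ => c)). apply Derive_correct, Hfd. exact (is_derive_const (K:=R_AbsRing) (V:=R_NormedModule) c t). }
  assert (Hud' : forall t, ex_derive u t) by (intro t; eexists; apply Hud).
  assert (Hup : forall t, 0 <= t <= 1 -> u (t + 1) = u t) by (intros; unfold u; rewrite Hper; auto).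
  assert (Hum : RInt u 0 1 = x).
  { unfold u. rewrite (RInt_ext (V:=R_CompleteNormedModule) _ (fun t => 1 * f psi t + c * (fun _ => 1) t)) by (intros; simpl; ring).
    rewrite RInt_lin. rewrite Hm. rewrite RInt_const. unfold c. change (1 * psi + (x - psi) * ((1 - 0) * 1) = x :> R). ring.
    apply exRd; auto. apply exRc. intros; apply continuous_const. }
  assert (Hest : forall t, 0 <= t <= 2 -> Rabs (Derive u t + G (u t) + V t - Hbar psi) < eps).
  { intros t Ht. rewrite (is_derive_unique _ _ _ (Hud t)). rewrite <- (Hcell t).
    replace (Derive (f psi) t + G (u t) + V t - (Derive (f psi) t + G (f psi t) + V t)) with (G (u t) - G (f psi t)) by ring.
    specialize (HAB t Ht). apply Hu; unfold u; try lra.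
    unfold c. split; apply Rabs_def2 in Hx; lra.
    replace (f psi t + c - f psi t) with c by ring. unfold c. lra. }
  apply Rabs_def1.
  - destruct (Rlt_dec (Hbar x - Hbar psi) eps) as [ok|nok]; auto. exfalso.
    apply (comp_gen G V Hbar f x u (-1) (Hcs x) (or_intror eq_refl) Hud' Hup Hum).
    intros t Ht _. specialize (Hest t Ht). apply Rabs_def2 in Hest. lra.
  - destruct (Rlt_dec (- eps) (Hbar x - Hbar psi)) as [ok|nok]; auto. exfalso.
    apply (comp_gen G V Hbar f x u 1 (Hcs x) (or_introl eq_refl) Hud' Hup Hum).
    intros t Ht _. specialize (Hest t Ht). apply Rabs_def2 in Hest. lra.
Qed.

Lemma RInt_scalR (u : R -> R) a b l : ex_RInt u a b -> RInt (fun x => l * u x) a b = l * RInt u a b.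
Proof.
  intros H. rewrite (RInt_ext (V:=R_CompleteNormedModule) _ (fun x => l * u x + 0 * u x)) by (intros; simpl; ring).
  rewrite RInt_lin by auto. change (l * RInt u a b + 0 * RInt u a b = l * RInt u a b :> R). ring.
Qed.

Lemma derive_int (phi : R -> R) : (forall x, continuous phi x) ->
  forall x, is_derive (fun x => RInt phi 0 x) x (phi x).
Proof.
  intros Hc x. apply (is_derive_RInt phi (fun x => RInt phi 0 x) 0 x).
  apply filter_forall. intro y. apply (RInt_correct (V:=R_CompleteNormedModule)). apply exRc; auto.
  apply Hc.
Qed.

Lemma RInt_shift1 (phi : R -> R) x : (forall x, continuous phi x) ->
  RInt phi 0 (x + 1) = RInt phi 0 1 + RInt (fun y => phi (y + 1)) 0 x.
Proof.
  intros Hc.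
  rewrite <- (RInt_Chasles (V:=R_CompleteNormedModule) phi 0 1 (x+1)) by (apply exRc; auto).
  change (RInt phi 0 1 + RInt phi 1 (x+1) = RInt phi 0 1 + RInt (fun y => phi (y + 1)) 0 x).
  f_equal.
  pose proof (RInt_comp_lin (V:=R_CompleteNormedModule) phi 1 1 0 x) as E.
  replace (1 * 0 + 1) with 1 in E by ring. replace (1 * x + 1) with (x + 1) in E by ring.
  rewrite <- E by (apply exRc; auto).
  apply RInt_ext. intros y _. change (1 * phi (1 * y + 1) = phi (y + 1) :> R).
  rewrite Rmult_1_l. f_equal. ring.
Qed.

Lemma is_derive_eq (f : R -> R) x l l' : is_derive f x l -> l = l' -> is_derive f x l'.
Proof. intros H <-; auto. Qed.

Section Gth.
Variables (G : R -> R) (f : R -> R -> R) (th : R).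
Hypothesis HG : is_C1 G.
Hypothesis Hf : is_C1 (f th).
Hypothesis Hper : periodic1 (f th).
Hypothesis Ha : Ith G f th 1 <> 0.

Let phi := fun y => Derive G (f th y).

Lemma phi_cont : forall x, continuous phi x.
Proof.
  intro x. unfold phi. apply (continuous_comp (f th) (Derive G)).
  apply C1_cont, Hf. apply HG.
Qed.

Lemma I_der : forall x, is_derive (Ith G f th) x (phi x).
Proof. intro x. unfold Ith. apply (derive_int phi phi_cont). Qed.

Lemma I_ex : forall x, ex_derive (Ith G f th) x.
Proof. intro x; eexists; apply I_der. Qed.

Lemma eI_cont : forall x, continuous (fun y => exp (Ith G f th y)) x.
Proof.
  intro x. apply (continuous_comp (Ith G f th) exp). apply C1_cont, I_ex.
  apply C1_cont. intro; eexists; apply is_derive_exp.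
Qed.

Lemma B_der : forall x, is_derive (Bth G f th) x (exp (Ith G f th x)).
Proof. intro x. unfold Bth. apply (derive_int _ eI_cont). Qed.

Lemma I_per : forall x, Ith G f th (x + 1) = Ith G f th x + Ith G f th 1.
Proof.
  intro x. unfold Ith at 1. rewrite RInt_shift1 by apply phi_cont.
  unfold Ith. rewrite Rplus_comm. f_equal. apply RInt_ext. intros y _. unfold phi. rewrite Hper. auto.
Qed.

Lemma B_per : forall x, Bth G f th (x + 1) = Bth G f th 1 + exp (Ith G f th 1) * Bth G f th x.
Proof.
  intro x. unfold Bth at 1. rewrite RInt_shift1 by apply eI_cont. f_equal.
  rewrite (RInt_ext (V:=R_CompleteNormedModule) _ (fun y => exp (Ith G f th 1) * exp (Ith G f th y))).
  apply RInt_scalR. apply exRc, eI_cont.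
  intros y _. rewrite I_per, exp_plus. simpl. ring.
Qed.

Lemma s_sq : sgn_th G f th = 1 \/ sgn_th G f th = -1.
Proof. unfold sgn_th. destruct (Rlt_dec 0 (Ith G f th 1)); auto. Qed.

Lemma g_der : forall x, is_derive (gth G f th) x
   (sgn_th G f th - phi x * gth G f th x).
Proof.
  intro x. unfold gth.
  set (s := sgn_th G f th). set (K := Bth G f th 1 / (exp (Ith G f th 1) - 1)).
  assert (H1 : is_derive (fun y => s * (Bth G f th y + K)) x (s * (exp (Ith G f th x) + 0))).
  { apply is_derive_scal. apply (is_derive_plus (Bth G f th) (fun _ => K)). apply B_der.
    exact (is_derive_const (K:=R_AbsRing) (V:=R_NormedModule) K x). }
  assert (H2 : is_derive (fun y => exp (- Ith G f th y)) x (- phi x * exp (- Ith G f th x))).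
  { apply (is_derive_comp exp (fun y => - Ith G f th y)). apply is_derive_exp.
    apply (is_derive_opp (Ith G f th)). apply I_der. }
  pose proof (is_derive_mult _ _ x _ _ H1 H2 Rmult_comm) as H3.
  refine (is_derive_eq _ _ _ _ H3 _).
  unfold plus, mult; simpl. rewrite exp_Ropp.
  assert (0 < exp (Ith G f th x)) by apply exp_pos.
  field. lra.
Qed.

Lemma g_ex : forall x, ex_derive (gth G f th) x.
Proof. intro x; eexists; apply g_der. Qed.

Lemma g_per : forall x, gth G f th (x + 1) = gth G f th x.
Proof.
  intro x. unfold gth. rewrite I_per, B_per.
  set (a := Ith G f th 1). assert (exp a - 1 <> 0).
  { intro E. apply Ha. fold a. assert (exp a = exp 0) by (rewrite exp_0; lra). apply exp_inv in H. auto. }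
  rewrite Ropp_plus_distr, exp_plus. rewrite !exp_Ropp.
  assert (0 < exp a) by apply exp_pos. assert (0 < exp (Ith G f th x)) by apply exp_pos.
  field. split; lra.
Qed.

Lemma b_pos : 0 < bth G f th.
Proof.
  unfold bth. apply RInt_gt_0. lra. 2: { intros; apply C1_cont, g_ex. }
  intros x Hx. unfold gth, sgn_th.
  assert (HB1 : 0 < Bth G f th 1).
  { unfold Bth. apply RInt_gt_0. lra. intros; apply exp_pos. intros; apply eI_cont. }
  assert (HBx : 0 <= Bth G f th x).
  { unfold Bth. apply RInt_ge_0. lra. apply exRc, eI_cont. intros; left; apply exp_pos. }
  assert (HBx1 : Bth G f th x <= Bth G f th 1).
  { unfold Bth. rewrite <- (RInt_Chasles (V:=R_CompleteNormedModule) _ 0 x 1) by (apply exRc, eI_cont).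
    assert (0 <= RInt (fun y => exp (Ith G f th y)) x 1).
    { apply RInt_ge_0. lra. apply exRc, eI_cont. intros; left; apply exp_pos. }
    change (RInt (fun y => exp (Ith G f th y)) 0 x <= RInt (fun y => exp (Ith G f th y)) 0 x + RInt (fun y => exp (Ith G f th y)) x 1). lra. }
  pose proof (exp_pos (- Ith G f th x)) as He.
  destruct (Rlt_dec 0 (Ith G f th 1)) as [Hp|Hn].
  - assert (1 < exp (Ith G f th 1)) by (pose proof (exp_increasing 0 _ Hp) as E; rewrite exp_0 in E; auto).
    assert (0 < Bth G f th 1 / (exp (Ith G f th 1) - 1)) by (apply Rdiv_lt_0_compat; lra).
    apply Rmult_lt_0_compat; [|auto]. nra.
  - assert (Ith G f th 1 < 0) by (destruct (Req_dec (Ith G f th 1) 0); [contradiction|lra]).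
    assert (exp (Ith G f th 1) < 1) by (pose proof (exp_increasing _ 0 H) as E; rewrite exp_0 in E; auto).
    pose proof (exp_pos (Ith G f th 1)).
    set (e := exp (Ith G f th 1)) in *.
    assert (Bth G f th 1 + Bth G f th 1 / (e - 1) = Bth G f th 1 * e / (e - 1)) by (field; lra).
    assert (Bth G f th 1 * e / (e - 1) < 0).
    { apply Rmult_lt_reg_r with (1 - e). lra. rewrite Rmult_0_l.
      replace (Bth G f th 1 * e / (e - 1) * (1 - e)) with (- (Bth G f th 1 * e)) by (field; lra). nra. }
    apply Rmult_lt_0_compat; [|auto]. nra.
Qed.

End Gth.

Lemma Rabs_def2b (x a : R) : Rabs x <= a -> - a <= x <= a.
Proof. unfold Rabs; destruct Rcase_abs; lra. Qed.

Lemma main_claim (G V Hbar : R -> R) (f : R -> R -> R) (th : R) :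
  is_C1 G -> (forall t, cell_solution G V Hbar f t) -> Ith G f th 1 <> 0 ->
  exists h0, 0 < h0 /\ forall h, 0 < h < h0 ->
    Hbar (th + sgn_th G f th * h * bth G f th) > Hbar th + h / 2.
Proof.
  intros HG Hcs Ha.
  pose proof (Hcs th) as [Hper [Hf [Hm Hcell]]].
  pose proof Hf as [Hfd Hfc].
  set (s := sgn_th G f th).
  assert (Hs : s = 1 \/ s = -1) by apply s_sq.
  set (gg := gth G f th).
  destruct (bounds (f th) 0 2 ltac:(lra) Hfd) as [A [B HAB]].
  destruct (bounds gg 0 2 ltac:(lra) (g_ex G f th HG Hf)) as [Ag [Bg Hg]].
  set (Mg := Rabs Ag + Rabs Bg + 1).
  assert (HMg : 0 < Mg) by (unfold Mg; pose proof (Rabs_pos Ag); pose proof (Rabs_pos Bg); lra).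
  assert (Hgb : forall x, 0 <= x <= 2 -> Rabs (gg x) <= Mg).
  { intros x Hx. specialize (Hg x Hx). pose proof (Rle_abs Bg). pose proof (Rle_abs (- Ag)).
    rewrite Rabs_Ropp in H0. unfold Mg. pose proof (Rabs_pos Ag). pose proof (Rabs_pos Bg).
    apply Rabs_le. lra. }
  assert (HDc : forall x, continuity_pt (Derive G) x).
  { intro x. apply continuity_pt_filterlim. apply HG. }
  destruct (unif (Derive G) (A - 1) (B + 1) HDc (1 / (2 * Mg)) ltac:(apply Rdiv_lt_0_compat; lra)) as [del [Hdel Hu]].
  exists (Rmin del 1 / Mg). split.
  { apply Rdiv_lt_0_compat; auto. apply Rmin_glb_lt; lra. }
  intros h [Hh0 Hh1].
  assert (HhM : h * Mg < Rmin del 1).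
  { apply Rmult_lt_compat_r with (r := Mg) in Hh1; auto. unfold Rdiv in Hh1.
    rewrite Rmult_assoc, Rinv_l, Rmult_1_r in Hh1; lra. }
  pose proof (Rmin_l del 1). pose proof (Rmin_r del 1).
  set (u := fun x => f th x + (s * h) * gg x).
  assert (Hud : forall x, is_derive u x (Derive (f th) x + (s * h) * (s - Derive G (f th x) * gg x))).
  { intro x. unfold u. apply (is_derive_plus (f th) (fun y => (s * h) * gg y)).
    apply Derive_correct, Hfd. apply is_derive_scal. apply (g_der G f th HG Hf). }
  assert (Hud' : forall x, ex_derive u x) by (intro x; eexists; apply Hud).
  assert (Hup : forall x, 0 <= x <= 1 -> u (x + 1) = u x).
  { intros x _. unfold u, gg. rewrite Hper. rewrite (g_per G f th HG Hf Hper Ha). auto. }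
  assert (Hum : RInt u 0 1 = th + s * h * bth G f th).
  { unfold u. rewrite (RInt_ext (V:=R_CompleteNormedModule) _ (fun t => 1 * f th t + (s * h) * gg t)) by (intros; simpl; ring).
    rewrite RInt_lin. rewrite Hm. unfold bth. fold gg. change (1 * th + s * h * RInt gg 0 1 = th + s * h * RInt gg 0 1 :> R). ring.
    apply exRd; auto. apply exRd. apply (g_ex G f th HG Hf). }
  assert (Hest : forall x, 0 <= x <= 2 -> Derive u x + G (u x) + V x > Hbar th + h / 2).
  { intros x Hx. rewrite (is_derive_unique _ _ _ (Hud x)).
    set (w := gg x). set (F := f th x).
    assert (Hw : Rabs w <= Mg) by (apply Hgb; auto).
    assert (Hsw : Rabs (s * h * w) <= h * Mg).
    { rewrite !Rabs_mult. rewrite (Rabs_right h) by lra.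
      assert (Rabs s = 1) by (destruct Hs as [-> | ->]; [apply Rabs_R1| rewrite Rabs_left; lra]).
      rewrite H1. nra. }
    apply Rabs_def2b in Hsw.
    destruct (MVT_gen G F (u x) (Derive G)) as [xi [Hxi Hmvt]].
    { intros y _. apply Derive_correct. apply HG. }
    { intros y _. apply C1_contpt. auto. }
    assert (HuF : u x = F + s * h * w) by reflexivity.
    assert (HFb : A <= F <= B) by (apply HAB; auto).
    assert (Hxi2 : A - 1 <= xi <= B + 1 /\ Rabs (xi - F) < del).
    { revert Hxi. rewrite HuF. unfold Rmin, Rmax.
      destruct (Rle_dec F (F + s * h * w)); intros Hxi; split; try lra;
      apply Rabs_def1; lra. }
    assert (Hz : Rabs (Derive G xi - Derive G F) < 1 / (2 * Mg)).
    { apply Hu; try lra. }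
    set (z := Derive G xi - Derive G F) in *.
    assert (Hwz : Rabs (w * z) < 1 / 2).
    { rewrite Rabs_mult. apply Rle_lt_trans with (Mg * Rabs z).
      apply Rmult_le_compat_r. apply Rabs_pos. auto.
      apply Rlt_le_trans with (Mg * (1 / (2 * Mg))). apply Rmult_lt_compat_l; auto.
      right. field. lra. }
    apply Rabs_def2 in Hwz.
    rewrite HuF in Hmvt. rewrite HuF.
    specialize (Hcell x). fold F in Hcell.
    assert (E : Derive (f th) x + s * h * (s - Derive G F * w) + G (F + s * h * w) + V x
              = Hbar th + s * s * h + s * h * (w * z)).
    { unfold z. rewrite <- Hcell. replace (G (F + s * h * w)) with (G F + (G (F + s * h * w) - G F)) by ring.
      rewrite Hmvt. ring. }
    rewrite E. set (P := w * z) in *.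
    destruct Hs as [-> | ->]; nra. }
  destruct (Rlt_dec (Hbar th + h / 2) (Hbar (th + s * h * bth G f th))) as [ok|nok]; [exact ok|].
  exfalso.
  apply (comp_gen G V Hbar f _ u 1 (Hcs _) (or_introl eq_refl) Hud' Hup Hum).
  intros x Hx _. specialize (Hest x Hx). lra.
Qed.

Theorem lemma4p2 (G V Hbar : R -> R) (f : R -> R -> R) (th : R) :
  is_C1 G -> coercive G -> lipschitz V -> periodic1 V ->
  (forall t, cell_solution G V Hbar f t) ->
  Ith G f th 1 <> 0 ->
  (0 < Ith G f th 1 ->
     exists h0, 0 < h0 /\ forall h, 0 < h < h0 ->
       exists ths, th < ths < th + h * bth G f th /\
         Hbar ths = Hbar th + h / 2 /\ Hbar th + h / 2 > Hbar th) /\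
  (Ith G f th 1 < 0 ->
     exists h0, 0 < h0 /\ forall h, 0 < h < h0 ->
       exists ths, th - h * bth G f th < ths < th /\
         Hbar ths = Hbar th + h / 2 /\ Hbar th + h / 2 > Hbar th).
Proof.
  intros HG _ _ _ Hcs Ha.
  pose proof (Hcs th) as [Hper [Hf _]].
  pose proof (b_pos G f th HG Hf Ha) as Hb.
  assert (Hc : continuity Hbar) by (intro; apply (Hbar_cont G V Hbar f HG Hcs)).
  destruct (main_claim G V Hbar f th HG Hcs Ha) as [h0 [Hh0 Hmain]].
  set (b := bth G f th) in *.
  split; intros Hsign; exists h0; split; auto; intros h Hh; specialize (Hmain h Hh);
    unfold sgn_th in Hmain; destruct (Rlt_dec 0 (Ith G f th 1)) as [Hp|Hn]; try lra.
  - assert (Hhb : 0 < h * b) by (apply Rmult_lt_0_compat; lra).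
    replace (th + 1 * h * b) with (th + h * b) in Hmain by ring.
    destruct (IVT_gen Hbar th (th + h * b) (Hbar th + h / 2) Hc) as [x [Hx Hfx]].
    { rewrite Rmin_left, Rmax_right; lra. }
    rewrite Rmin_left, Rmax_right in Hx by lra.
    exists x. split; [|split; [auto|lra]].
    split.
    + destruct (Req_dec x th) as [->|]; [lra|lra].
    + destruct (Req_dec x (th + h * b)) as [E|]; [rewrite E in Hfx; lra|lra].
  - assert (Hhb : 0 < h * b) by (apply Rmult_lt_0_compat; lra).
    replace (th + -1 * h * b) with (th - h * b) in Hmain by ring.
    destruct (IVT_gen Hbar (th - h * b) th (Hbar th + h / 2) Hc) as [x [Hx Hfx]].
    { rewrite Rmin_right, Rmax_left; lra. }
    rewrite Rmin_left, Rmax_right in Hx by lra.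
    exists x. split; [|split; [auto|lra]].
    split.
    + destruct (Req_dec x (th - h * b)) as [E|]; [rewrite E in Hfx; lra|lra].
    + destruct (Req_dec x th) as [->|]; [lra|lra].
Qed.
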